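(* Let $N'$ be a positive integer. For every integer $c$ with $1\le c\le 2N'-1$ and every $s\in\mathbb{C}$ with $\Re(s)>2$, $$\zeta(-c,s+c)=\sum_{d=1}^{N'}\frac{a_{c+1,d}}{2}\,T(-d+1,-d+1;s+2d-2).$$
   Context: For $\Re(s)>2$ and an integer $c\ge0$, $\zeta(-c,s+c)=\sum_{1\le n_1<n_2} n_1^{c}n_2^{-s-c}=\sum_{m,n\ge1}m^c(m+n)^{-s-c}$ (Euler–Zagier double zeta function). $T(s_1,s_2;s):=\sum_{m,n\ge1} m^{-s_1}n^{-s_2}(m+n)^{-s}$ is the Tornheim double zeta function. $(a_{c,d})_{c,d\ge1}$ are the integers defined by: $a_{c,1}=1$ for $c\ge1$; $a_{1,d}=a_{2,d}=0$ for $d\ge2$; $a_{3,2}=-2$ and $a_{3,d}=0$ for $d\ge3$; and $a_{c+2,d+1}=a_{c+1,d+1}-a_{c,d}$ for $c\ge2$, $d\ge1$. *)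

(* Defs.v *)
From Stdlib Require Import Reals ZArith.
From Coquelicot Require Import Coquelicot.
Open Scope R_scope.

(* n^s := exp(s log n) for a positive integer n and complex s *)
Definition npow (n : nat) (s : C) : C :=
  let L := ln (INR n) in
  (exp (Re s * L) * cos (Im s * L), exp (Re s * L) * sin (Im s * L)).

Definition CSeries (a : nat -> C) : C :=
  (Series (fun k => Re (a k)), Series (fun k => Im (a k))).

(* Tornheim double zeta: T(s1,s2;s) = sum_{m,n>=1} m^{-s1} n^{-s2} (m+n)^{-s} *)
Definition Tornheim (s1 s2 s : C) : C :=
  CSeries (fun m => CSeries (fun n =>
    (npow (S m) (- s1) * npow (S n) (- s2) * npow (S m + S n) (- s))%C)).

(* Euler-Zagier double zeta: zeta(s1,s2) = sum_{1<=n1<n2} n1^{-s1} n2^{-s2}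
   = sum_{m,n>=1} m^{-s1} (m+n)^{-s2} *)
Definition EZzeta2 (s1 s2 : C) : C :=
  CSeries (fun m => CSeries (fun n =>
    (npow (S m) (- s1) * npow (S m + S n) (- s2))%C)).

(* the integers a_{c,d} (c,d >= 1); values at index 0 are irrelevant (set 0) *)
Fixpoint acoef (c : nat) : nat -> Z :=
  match c with
  | 0%nat => fun _ => 0%Z
  | 1%nat | 2%nat => fun d => match d with 1%nat => 1%Z | _ => 0%Z end
  | 3%nat => fun d => match d with 1%nat => 1%Z | 2%nat => (-2)%Z | _ => 0%Z end
  | S ((S ((S (S _)) as c2)) as c3) => fun d =>
      match d with
      | 0%nat => 0%Z
      | 1%nat => 1%Z
      | S d' => (acoef c3 (S d') - acoef c2 d')%Z
      end
  end.

(* Main.v *)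
Require Import Defs.
From Stdlib Require Import Reals ZArith.
From Coquelicot Require Import Coquelicot.
From Stdlib Require Import Lra Lia.
Open Scope R_scope.

Lemma exp_le_mono x y : x <= y -> exp x <= exp y.
Proof. intros [H|H]. left; now apply exp_increasing. right; now subst. Qed.

Lemma ln_le_m1 y : 0 < y -> ln y <= y - 1.
Proof. intros Hy. pose proof (exp_ineq1_le (ln y)). rewrite exp_ln in H; lra. Qed.

Lemma INR_S_pos k : 0 < INR (S k).
Proof. apply lt_0_INR; lia. Qed.

Lemma ex_series_bounded (a : nat -> R) M :
  (forall n, 0 <= a n) -> (forall n, sum_f_R0 a n <= M) -> ex_series a.
Proof.
  intros Ha HM.
  destruct (ex_finite_lim_seq_incr (sum_n a) M) as [l Hl].
  - intros n. rewrite !sum_n_Reals. cbn [sum_f_R0]. specialize (Ha (S n)). lra.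
  - intros n. rewrite sum_n_Reals. apply HM.
  - exists l. exact Hl.
Qed.

Lemma pser p : 1 < p -> ex_series (fun k => exp (- p * ln (INR (S k)))).
Proof.
  intros Hp. apply ex_series_incr_1.
  set (b := fun k => exp ((1 - p) * ln (INR (S k)))).
  assert (key : forall k, exp (- p * ln (INR (S (S k)))) <= (b k - b (S k)) / (p - 1)).
  { intros k. unfold b.
    set (K := INR (S (S k))). set (K1 := INR (S k)).
    assert (HK : 0 < K) by apply INR_S_pos. assert (HK1 : 0 < K1) by apply INR_S_pos.
    assert (HKK : K = K1 + 1) by (unfold K, K1; rewrite (S_INR (S k)); ring).
    set (u := ln K1). set (v := ln K).
    assert (Huv : u - v <= - / K).
    { unfold u, v. rewrite <- ln_div by lra. eapply Rle_trans. apply ln_le_m1.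
      apply Rdiv_lt_0_compat; lra. right. rewrite HKK. field. lra. }
    assert (E1 : exp ((1 - p) * u) >= exp ((1-p) * v) * (1 + (1-p)*(u - v))).
    { replace ((1-p)*u) with ((1-p)*v + (1-p)*(u-v)) by ring. rewrite exp_plus.
      pose proof (exp_ineq1_le ((1-p)*(u-v))). pose proof (exp_pos ((1-p)*v)). nra. }
    assert (E2 : exp ((1-p) * v) = exp (- p * v) * K).
    { replace ((1-p)*v) with (-p*v + v) by ring. rewrite exp_plus. unfold v. rewrite exp_ln; lra. }
    fold K. fold v. fold K1 in u. change (ln K1) with u.
    apply Rmult_le_reg_r with (p - 1). lra.
    unfold Rdiv. rewrite Rmult_assoc, Rinv_l by lra. rewrite Rmult_1_r.
    rewrite E2 in E1 |- *. pose proof (exp_pos (-p*v)).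
    assert (K * (u - v) <= -1). { apply Rmult_le_compat_l with (r := K) in Huv; [|lra].
      rewrite Ropp_mult_distr_r_reverse, Rinv_r in Huv; lra. }
    assert (H2 : (p-1)*(-(K*(u-v)) - 1) >= 0) by nra.
    assert (H3 : exp (-p*v) * ((p-1)*(-(K*(u-v)) - 1)) >= 0) by nra.
    nra. }
  apply ex_series_bounded with (M := b 0%nat / (p - 1)).
  - intros n. left. apply exp_pos.
  - assert (forall n, sum_f_R0 (fun k => exp (- p * ln (INR (S (S k))))) n <= (b 0%nat - b (S n)) / (p - 1)).
    { induction n. cbn [sum_f_R0]. apply key. cbn [sum_f_R0]. eapply Rle_trans. apply Rplus_le_compat. apply IHn. apply key.
      right. field. lra. }
    intros n. eapply Rle_trans. apply H. unfold Rdiv. apply Rmult_le_compat_r.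
    left. apply Rinv_0_lt_compat. lra. assert (0 < b (S n)) by apply exp_pos. lra.
Qed.

Lemma exs_le (a b: nat -> R) : (forall n, Rabs (a n) <= b n) -> ex_series b -> ex_series a.
Proof. intros. apply (@ex_series_le R_AbsRing R_CompleteNormedModule) with b. exact H. exact H0. Qed.
Lemma exs_scal c (a: nat -> R) : ex_series a -> ex_series (fun n => c * a n).
Proof. intros H. apply (@ex_series_scal_l R_AbsRing R_NormedModule c a H). Qed.
Lemma exs_plus (a b: nat -> R) : ex_series a -> ex_series b -> ex_series (fun n => a n + b n).
Proof. intros H H0. apply (@ex_series_plus R_AbsRing R_NormedModule a b H H0). Qed.
Lemma exs_minus (a b: nat -> R) : ex_series a -> ex_series b -> ex_series (fun n => a n - b n).
Proof. intros H H0. apply (@ex_series_minus R_AbsRing R_NormedModule a b H H0). Qed.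
Lemma exs_incr (a : nat -> R) n : ex_series a -> ex_series (fun k => a (n + k)%nat).
Proof. intros. apply (@ex_series_incr_n R_AbsRing R_NormedModule a n). auto. Qed.

Lemma ser_bound (a b : nat -> R) : (forall n, Rabs (a n) <= b n) -> ex_series b ->
  ex_series a /\ Rabs (Series a) <= Series b.
Proof.
  intros H Hb. split. now apply exs_le with b.
  eapply Rle_trans. apply Series_Rabs. apply exs_le with b; auto.
  intros n; rewrite Rabs_Rabsolu; auto.
  apply Series_le; auto. intros n; split; auto. apply Rabs_pos.
Qed.

Lemma lim_partial (g : nat -> R) : ex_series g -> is_lim_seq (sum_f_R0 g) (Series g).
Proof.
  intros H. apply Series_correct in H.
  apply is_lim_seq_ext with (sum_n g). intros; apply sum_n_Reals. exact H.
Qed.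


Definition dom (g : nat -> R) (f : nat -> nat -> R) := exists K, forall m n, Rabs (f m n) <= K * (g m * g n).
Definition DS (f : nat -> nat -> R) := Series (fun m => Series (f m)).

Lemma dom_swap g f : dom g f -> dom g (fun m n => f n m).
Proof. intros [K HK]; exists K; intros m n. rewrite (Rmult_comm (g m)). apply HK. Qed.

Lemma dom_inner g (g_ser : ex_series g) f : dom g f -> forall m, ex_series (f m).
Proof. intros [K HK] m. apply exs_le with (fun n => (K * g m) * g n).
  intros n. rewrite Rmult_assoc. apply HK. apply exs_scal, g_ser. Qed.

Lemma dom_outer g (g_ser : ex_series g) f : dom g f -> ex_series (fun m => Series (f m)).
Proof. intros [K HK]. apply exs_le with (fun m => (K * Series g) * g m).
  intros m. replace (K * Series g * g m) with (Series (fun n => (K * g m) * g n)).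
  apply ser_bound. intros n. rewrite Rmult_assoc. apply HK. apply exs_scal, g_ser.
  rewrite Series_scal_l. ring. apply exs_scal, g_ser. Qed.

Lemma dom_plus g f h : dom g f -> dom g h -> dom g (fun m n => f m n + h m n).
Proof. intros [K1 H1] [K2 H2]. exists (K1 + K2). intros m n.
  eapply Rle_trans. apply Rabs_triang. specialize (H1 m n). specialize (H2 m n). lra. Qed.

Lemma dom_scal g c f : dom g f -> dom g (fun m n => c * f m n).
Proof. intros [K H1]. exists (Rabs c * K). intros m n. rewrite Rabs_mult, Rmult_assoc.
  apply Rmult_le_compat_l. apply Rabs_pos. apply H1. Qed.

Lemma dom_mulb g u f : (forall m n, Rabs (u m n) <= 1) -> dom g f -> dom g (fun m n => u m n * f m n).
Proof. intros Hu [K H1]. exists K. intros m n. rewrite Rabs_mult.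
  pose proof (Rabs_pos (f m n)). specialize (Hu m n). specialize (H1 m n). pose proof (Rabs_pos (u m n)). nra. Qed.

Lemma DS_plus g (g_ser : ex_series g) f h : dom g f -> dom g h -> DS (fun m n => f m n + h m n) = DS f + DS h.
Proof. intros Hf Hh. unfold DS. rewrite <- Series_plus by (apply (dom_outer g g_ser); auto).
  apply Series_ext. intros m. apply Series_plus; apply (dom_inner g g_ser); auto. Qed.

Lemma DS_scal c f : DS (fun m n => c * f m n) = c * DS f.
Proof. unfold DS. rewrite <- Series_scal_l. apply Series_ext. intros m. apply Series_scal_l. Qed.

Lemma DS_ext f h : (forall m n, f m n = h m n) -> DS f = DS h.
Proof. intros H. unfold DS. apply Series_ext. intros m. apply Series_ext. auto. Qed.

Lemma DS_swap g (g_pos : forall n, 0 <= g n) (g_ser : ex_series g) f : dom g f -> DS f = DS (fun m n => f n m).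
Proof.
  intros Hf. pose proof (dom_swap g f Hf) as Hf'. destruct Hf as [K HK].
  set (A := fun n => Series (fun m => f m n)).
  assert (P : forall M, ex_series (fun n => sum_f_R0 (fun m => f m n) M) /\
     sum_f_R0 (fun m => Series (f m)) M = Series (fun n => sum_f_R0 (fun m => f m n) M)).
  { induction M; cbn [sum_f_R0].
    - split. apply (dom_inner g g_ser). exists K; auto. reflexivity.
    - destruct IHM as [IH1 IH2]. split. apply exs_plus; auto. apply (dom_inner g g_ser); exists K; auto.
      rewrite IH2, Series_plus; auto. apply (dom_inner g g_ser); exists K; auto. }
  assert (HA : ex_series A) by (apply (dom_outer g g_ser _ Hf')).
  set (T := fun M => Series g - sum_f_R0 g M).
  assert (HT : forall M, T M = Series (fun k => g (S M + k)%nat)).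
  { intros M. unfold T. rewrite (Series_incr_n g (S M)) by (auto; lia). simpl pred. ring. }
  assert (Hg' : forall M, ex_series (fun k => g (S M + k)%nat)) by (intros; apply exs_incr, g_ser).
  assert (Bd : forall M, Rabs (Series A - sum_f_R0 (fun m => Series (f m)) M) <= K * Series g * T M).
  { intros M. destruct (P M) as [P1 P2]. rewrite P2, <- Series_minus by auto.
    assert (E : forall n, A n - sum_f_R0 (fun m => f m n) M = Series (fun k => f (S M + k)%nat n)).
    { intros n. unfold A. rewrite (Series_incr_n (fun m => f m n) (S M)) by (auto with arith; apply (dom_inner g g_ser _ Hf' n)).
      simpl pred. ring. }
    rewrite (Series_ext _ _ E).
    replace (K * Series g * T M) with (Series (fun n => (K * T M) * g n)).
    2:{ rewrite Series_scal_l. ring. }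
    apply ser_bound. 2: apply exs_scal, g_ser.
    intros n. rewrite HT.
    replace (K * Series (fun k => g (S M + k)%nat) * g n) with (Series (fun k => (K * g n) * g (S M + k)%nat)).
    2:{ rewrite Series_scal_l. ring. }
    apply ser_bound. 2: apply exs_scal; auto.
    intros k. eapply Rle_trans. apply HK. right; ring. }
  assert (LT : is_lim_seq T 0).
  { replace 0 with (Series g - Series g) by ring. apply is_lim_seq_minus'.
    apply is_lim_seq_const. apply lim_partial, g_ser. }
  assert (Lim : is_lim_seq (sum_f_R0 (fun m => Series (f m))) (Series A)).
  { apply is_lim_seq_le_le with (u := fun M => Series A - K * Series g * T M)
      (w := fun M => Series A + K * Series g * T M).
    - intros M. specialize (Bd M). apply Rabs_le_between in Bd. lra.
    - assert (L1 : is_lim_seq (fun M => Series A - K * Series g * T M) (Series A - K * Series g * 0)).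
      { apply is_lim_seq_minus'. apply is_lim_seq_const.
      apply is_lim_seq_ext with (fun M => (K * Series g) * T M). intros; ring.
      replace (K * Series g * 0) with 0 by ring.
      pose proof (is_lim_seq_scal_l T (K*Series g) 0 LT) as L3. simpl in L3. rewrite Rmult_0_r in L3. exact L3. }
      rewrite Rmult_0_r, Rminus_0_r in L1. exact L1.
    - assert (L1 : is_lim_seq (fun M => Series A + K * Series g * T M) (Series A + K * Series g * 0)).
      { apply is_lim_seq_plus'. apply is_lim_seq_const.
      apply is_lim_seq_ext with (fun M => (K * Series g) * T M). intros; ring.
      replace (K * Series g * 0) with 0 by ring.
      pose proof (is_lim_seq_scal_l T (K*Series g) 0 LT) as L3. simpl in L3. rewrite Rmult_0_r in L3. exact L3. }
      rewrite Rmult_0_r, Rplus_0_r in L1. exact L1. }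
  unfold DS. apply is_series_unique.
  apply is_lim_seq_ext with (u := sum_f_R0 (fun m => Series (f m))) (v := sum_n (fun m => Series (f m))) in Lim.
  exact Lim. intros; symmetry; apply sum_n_Reals.
Qed.
Fixpoint sumd (f : nat -> R) (N : nat) : R :=
  match N with 0%nat => 0 | S k => sumd f k + f (S k) end.

Lemma sumd_shift f N : sumd f (S N) = f 1%nat + sumd (fun d => f (S d)) N.
Proof. induction N. simpl. ring. change (sumd f (S (S N))) with (sumd f (S N) + f (S (S N))).
  rewrite IHN. simpl. ring. Qed.

Lemma sumd_ext f h N : (forall d, (1 <= d <= N)%nat -> f d = h d) -> sumd f N = sumd h N.
Proof. induction N; intros H; simpl. reflexivity. rewrite IHN. rewrite H. reflexivity. lia.
  intros; apply H; lia. Qed.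

Lemma sumd_zero N : sumd (fun _ => 0) N = 0.
Proof. induction N; simpl. reflexivity. rewrite IHN; ring. Qed.

Lemma sumd_minus f h N : sumd (fun d => f d - h d) N = sumd f N - sumd h N.
Proof. induction N; simpl. ring. rewrite IHN; ring. Qed.

Lemma sumd_scal c f N : sumd (fun d => c * f d) N = c * sumd f N.
Proof. induction N; simpl. ring. rewrite IHN; ring. Qed.

Lemma acoef_1 c : (1 <= c)%nat -> acoef c 1 = 1%Z.
Proof. intros H. destruct c as [|[|[|[|c]]]]; try lia; reflexivity. Qed.

Definition Palg x y c := forall N, (c + 1 <= 2 * N)%nat ->
  x ^ c + y ^ c = sumd (fun d => IZR (acoef (S c) d) * (x * y) ^ (d - 1)) N.

Lemma alg_all x y (Hxy : x + y = 1) k : Palg x y (S k) /\ Palg x y (S (S k)).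
Proof.
  induction k.
  - split; intros N HN.
    + destruct N as [|N0]; [lia|]. rewrite sumd_shift.
      rewrite (sumd_ext _ (fun _ => 0)). rewrite sumd_zero. simpl. lra.
      intros d Hd. destruct d as [|d]; [lia|]. simpl. ring.
    + destruct N as [|[|N0]]; try lia. rewrite !sumd_shift.
      rewrite (sumd_ext _ (fun _ => 0)). rewrite sumd_zero. simpl.
      replace y with (1 - x) by lra. ring.
      intros d Hd. destruct d as [|d]; [lia|]. simpl. ring.
  - destruct IHk as [IH1 IH2]. split. exact IH2.
    intros N HN. destruct N as [|N0]; [lia|].
    assert (E : x ^ (S (S (S k))) + y ^ (S (S (S k))) =
      (x ^ (S (S k)) + y ^ (S (S k))) - (x * y) * (x ^ (S k) + y ^ (S k))).
    { replace y with (1 - x) by lra. simpl. ring. }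
    rewrite E. rewrite (IH2 (S N0)) by lia. rewrite (IH1 N0) by lia.
    rewrite !sumd_shift. rewrite <- sumd_scal.
    set (t := x * y).
    rewrite (sumd_ext (fun d => IZR (acoef (S (S (S (S k)))) (S d)) * t ^ (S d - 1))
       (fun d => IZR (acoef (S (S (S k))) (S d)) * t ^ (S d - 1) - t * (IZR (acoef (S (S k)) d) * t ^ (d - 1)))).
    rewrite sumd_minus. rewrite !acoef_1 by lia. ring.
    intros d Hd. destruct d as [|d]; [lia|].
    change (acoef (S (S (S (S k)))) (S (S d))) with (acoef (S (S (S k))) (S (S d)) - acoef (S (S k)) (S d))%Z.
    rewrite minus_IZR. replace (S (S d) - 1)%nat with (S (S d - 1)) by lia. simpl pow.
    replace (S d - 1)%nat with d by lia. replace (d - 0)%nat with d by lia. ring.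
Qed.
Lemma npow_shift k s r : npow k (-(s + RtoC r))%C = (RtoC (exp (- r * ln (INR k))) * npow k (-s))%C.
Proof. destruct s as [a b]. unfold npow, RtoC. apply injective_projections; simpl;
  replace (- (a + r) * ln (INR k)) with (- r * ln (INR k) + - a * ln (INR k)) by ring;
  rewrite exp_plus; replace (-(b+0)) with (-b) by ring; ring. Qed.

Lemma npow_real k r : npow k (-(RtoC r))%C = RtoC (exp (- r * ln (INR k))).
Proof. unfold npow, RtoC. apply injective_projections; simpl;
  replace (-0 * ln (INR k)) with 0 by ring; rewrite ?cos_0, ?sin_0; ring. Qed.

Lemma Re_RtoC_mult u z : Re (RtoC u * z)%C = u * Re z.
Proof. destruct z; unfold RtoC; simpl; ring. Qed.
Lemma Im_RtoC_mult u z : Im (RtoC u * z)%C = u * Im z.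
Proof. destruct z; unfold RtoC; simpl; ring. Qed.

Lemma Rplus_le_compat_l_pos a b : 0 < b -> a <= a + b.
Proof. intros; lra. Qed.

Lemma pow_01 x n : 0 <= x <= 1 -> Rabs (x ^ n) <= 1.
Proof. intros H. rewrite Rabs_pos_eq by (apply pow_le; lra).
  induction n; simpl. lra. nra. Qed.

Lemma dom_zero g : dom g (fun _ _ => 0).
Proof. exists 0. intros. rewrite Rabs_R0. lra. Qed.

Lemma dom_sumd g (F : nat -> nat -> nat -> R) N : (forall d, dom g (F d)) ->
  dom g (fun m n => sumd (fun d => F d m n) N).
Proof. intros H. induction N; simpl. apply dom_zero. apply dom_plus; auto. Qed.

Lemma DS_sumd g (g_ser : ex_series g) (F : nat -> nat -> nat -> R) N : (forall d, dom g (F d)) ->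
  DS (fun m n => sumd (fun d => F d m n) N) = sumd (fun d => DS (F d)) N.
Proof. intros H. induction N; simpl.
  - unfold DS. rewrite (Series_ext _ (fun _ => 0 * 0)). rewrite Series_scal_l. ring.
    intros m. rewrite (Series_ext _ (fun _ => 0 * 0)). rewrite Series_scal_l. ring. intros; ring.
  - rewrite DS_plus with (g := g); auto. rewrite IHN. reflexivity. apply dom_sumd; auto. Qed.

Lemma sumd_mult_r f r N : sumd f N * r = sumd (fun d => f d * r) N.
Proof. induction N; simpl. ring. rewrite <- IHN. ring. Qed.

Definition KK m n := INR (S m + S n).
Definition XX m n := INR (S m) / KK m n.
Definition YY m n := INR (S n) / KK m n.

Lemma KK_pos m n : 0 < KK m n.
Proof. unfold KK. apply lt_0_INR. lia. Qed.
Lemma KK_eq m n : KK m n = INR (S m) + INR (S n).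
Proof. unfold KK. apply plus_INR. Qed.
Lemma XX_01 m n : 0 <= XX m n <= 1.
Proof. unfold XX. pose proof (KK_eq m n). pose proof (INR_S_pos m). pose proof (INR_S_pos n).
  split. apply Rdiv_le_0_compat. now left. apply KK_pos. apply (proj1 (Rdiv_le_1 (INR (S m)) (KK m n) (KK_pos m n))). rewrite H. now apply Rplus_le_compat_l_pos. Qed.
Lemma YY_01 m n : 0 <= YY m n <= 1.
Proof. unfold YY. pose proof (KK_eq m n). pose proof (INR_S_pos m). pose proof (INR_S_pos n).
  split. apply Rdiv_le_0_compat. now left. apply KK_pos. apply (proj1 (Rdiv_le_1 (INR (S n)) (KK m n) (KK_pos m n))). rewrite H. rewrite Rplus_comm. now apply Rplus_le_compat_l_pos. Qed.
Lemma XY_sum m n : XX m n + YY m n = 1.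
Proof. unfold XX, YY. pose proof (KK_pos m n). rewrite KK_eq in *. set (p := INR (S m)) in *. set (q := INR (S n)) in *. field. lra. Qed.
Lemma XX_swap m n : XX n m = YY m n.
Proof. unfold XX, YY, KK. rewrite Nat.add_comm. reflexivity. Qed.

Lemma main_gen g (g_pos : forall n, 0 <= g n) (g_ser : ex_series g) r (Hr : dom g r)
  (Hsym : forall m n, r m n = r n m) c N (Hc : (1 <= c)%nat) (HN : (c + 1 <= 2 * N)%nat) :
  DS (fun m n => XX m n ^ c * r m n) =
  sumd (fun d => IZR (acoef (S c) d) / 2 * DS (fun m n => (XX m n * YY m n) ^ (d - 1) * r m n)) N.
Proof.
  assert (DX : dom g (fun m n => XX m n ^ c * r m n)) by (apply dom_mulb; auto; intros; apply pow_01, XX_01).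
  assert (DY : dom g (fun m n => YY m n ^ c * r m n)) by (apply dom_mulb; auto; intros; apply pow_01, YY_01).
  assert (DXY : forall d, dom g (fun m n => (XX m n * YY m n) ^ (d - 1) * r m n)).
  { intros d. apply dom_mulb; auto; intros; apply pow_01. pose proof (XX_01 m n); pose proof (YY_01 m n); split; nra. }
  assert (Sw : DS (fun m n => XX m n ^ c * r m n) = DS (fun m n => YY m n ^ c * r m n)).
  { rewrite (DS_swap g g_pos g_ser _ DX). apply DS_ext. intros m n. rewrite XX_swap, Hsym. reflexivity. }
  transitivity (/2 * DS (fun m n => (XX m n ^ c + YY m n ^ c) * r m n)).
  { rewrite (DS_ext (fun m n => (XX m n ^ c + YY m n ^ c) * r m n) (fun m n => XX m n ^ c * r m n + YY m n ^ c * r m n)) by (intros; ring).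
    rewrite DS_plus with (g := g); auto. rewrite <- Sw. field. }
  rewrite (DS_ext (fun m n => (XX m n ^ c + YY m n ^ c) * r m n) (fun m n => sumd (fun d => IZR (acoef (S c) d) * ((XX m n * YY m n) ^ (d - 1) * r m n)) N)).
  2:{ intros m n. destruct c as [|c0]; [lia|].
      destruct (alg_all (XX m n) (YY m n) (XY_sum m n) c0) as [P1 _].
      rewrite (P1 N HN). rewrite sumd_mult_r. apply sumd_ext. intros; ring. }
  rewrite DS_sumd with (g := g); auto. 2:{ intros d. apply dom_scal. auto. }
  rewrite <- sumd_scal. apply sumd_ext. intros d _. rewrite DS_scal. field.
Qed.

Lemma fst_sum (F : nat -> C) N : fst (sum_n_m F 1 N) = sumd (fun d => fst (F d)) N.
Proof. induction N. rewrite sum_n_m_zero by lia. reflexivity.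
  rewrite sum_n_Sm by lia. simpl sumd. rewrite <- IHN. destruct (sum_n_m F 1 N), (F (S N)). reflexivity. Qed.
Lemma snd_sum (F : nat -> C) N : snd (sum_n_m F 1 N) = sumd (fun d => snd (F d)) N.
Proof. induction N. rewrite sum_n_m_zero by lia. reflexivity.
  rewrite sum_n_Sm by lia. simpl sumd. rewrite <- IHN. destruct (sum_n_m F 1 N), (F (S N)). reflexivity. Qed.

Lemma term_EZ s c m n : (npow (S m) (- RtoC (- INR c)) * npow (S m + S n) (- (s + RtoC (INR c))))%C
  = (RtoC (XX m n ^ c) * npow (S m + S n) (-s))%C.
Proof.
  rewrite npow_real, npow_shift, Cmult_assoc, <- RtoC_mult. f_equal. f_equal.
  rewrite <- exp_plus. unfold XX, KK. rewrite <- Rpower_pow. unfold Rpower.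
  rewrite ln_div. f_equal. ring. apply INR_S_pos. apply lt_0_INR; lia.
  apply Rdiv_lt_0_compat. apply INR_S_pos. apply lt_0_INR; lia.
Qed.

Lemma term_T s d m n : (1 <= d)%nat ->
  (npow (S m) (- RtoC (1 - INR d)) * npow (S n) (- RtoC (1 - INR d)) *
   npow (S m + S n) (- (s + RtoC (2 * INR d - 2))))%C
  = (RtoC ((XX m n * YY m n) ^ (d - 1)) * npow (S m + S n) (-s))%C.
Proof.
  intros Hd.
  rewrite !npow_real, npow_shift, Cmult_assoc, <- !RtoC_mult. f_equal. f_equal.
  rewrite <- !exp_plus. unfold XX, YY, KK. rewrite <- Rpower_pow. unfold Rpower.
  rewrite ln_mult, !ln_div, minus_INR by (first [lia | apply INR_S_pos | apply lt_0_INR; lia | apply Rdiv_lt_0_compat; first [apply INR_S_pos | apply lt_0_INR; lia]]).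
  f_equal. change (INR 1) with 1. ring.
  apply Rmult_lt_0_compat; apply Rdiv_lt_0_compat; first [apply INR_S_pos | apply lt_0_INR; lia].
Qed.

Lemma Zexp_bound a (Ha : 0 < a) m n :
  exp (- a * ln (INR (S m + S n))) <=
  exp (- (a/2) * ln (INR (S m))) * exp (- (a/2) * ln (INR (S n))).
Proof.
  rewrite <- exp_plus. apply exp_le_mono.
  pose proof (INR_S_pos m) as Hp. pose proof (INR_S_pos n) as Hq.
  rewrite plus_INR. set (p := INR (S m)) in *. set (q := INR (S n)) in *.
  assert (H : ln p + ln q <= 2 * ln (p + q)).
  { rewrite <- ln_mult by lra. replace (2 * ln (p + q)) with (ln (p + q) + ln (p + q)) by ring.
    rewrite <- ln_mult by lra. apply ln_le. nra. nra. }
  nra.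
Qed.

Lemma Z_dom a b (Ha : 0 < a) :
  dom (fun j => exp (- (a/2) * ln (INR (S j)))) (fun m n => Re (npow (S m + S n) (- (a, b)))) /\
  dom (fun j => exp (- (a/2) * ln (INR (S j)))) (fun m n => Im (npow (S m + S n) (- (a, b)))).
Proof.
  assert (B : forall m n (t : R), Rabs t <= 1 -> Rabs (exp (- a * ln (INR (S m + S n))) * t) <=
     1 * (exp (- (a/2) * ln (INR (S m))) * exp (- (a/2) * ln (INR (S n))))).
  { intros m n t Ht. rewrite Rmult_1_l. eapply Rle_trans; [|apply (Zexp_bound a Ha)].
    rewrite Rabs_mult. rewrite (Rabs_pos_eq (exp _)). 2: left; apply exp_pos.
    pose proof (exp_pos (- a * ln (INR (S m + S n)))). nra. }
  split; exists 1; intros m n.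
  - change (Re (npow (S m + S n) (- (a, b)))) with (exp (- a * ln (INR (S m + S n))) * cos (- b * ln (INR (S m + S n)))).
    apply B. pose proof (COS_bound (- b * ln (INR (S m + S n)))). apply Rabs_le; lra.
  - change (Im (npow (S m + S n) (- (a, b)))) with (exp (- a * ln (INR (S m + S n))) * sin (- b * ln (INR (S m + S n)))).
    apply B. pose proof (SIN_bound (- b * ln (INR (S m + S n)))). apply Rabs_le; lra.
Qed.

Theorem proposition3p3 (N' : nat) (c : nat) (s : C) :
  (1 <= N')%nat -> (1 <= c)%nat -> (c <= 2 * N' - 1)%nat -> 2 < Re s ->
  EZzeta2 (RtoC (- INR c)) (s + RtoC (INR c))%C =
  sum_n_m (fun d : nat =>
    (RtoC (IZR (acoef (S c) d) / 2) *
     Tornheim (RtoC (1 - INR d)) (RtoC (1 - INR d)) (s + RtoC (2 * INR d - 2)))%C)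
    1 N'.
Proof.
  intros HN' Hc HcN Hs.
  set (g := fun j => exp (- (Re s / 2) * ln (INR (S j)))).
  assert (g_pos : forall n, 0 <= g n) by (intros; left; apply exp_pos).
  assert (g_ser : ex_series g) by (apply pser; lra).
  assert (HN : (c + 1 <= 2 * N')%nat) by lia.
  assert (Hsym : forall (F : nat -> C), (forall m n, F (S m + S n)%nat = F (S n + S m)%nat)).
  { intros F m n. rewrite Nat.add_comm. reflexivity. }
  destruct s as [a b]. simpl in Hs.
  destruct (Z_dom a b ltac:(lra)) as [DR DI].
  apply injective_projections.
  - unfold EZzeta2, CSeries. cbn [fst snd Re Im].
    rewrite fst_sum.
    transitivity (DS (fun m n => XX m n ^ c * Re (npow (S m + S n) (- (a, b))))).
    { apply DS_ext. intros m n. rewrite term_EZ. apply Re_RtoC_mult. }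
    rewrite (main_gen g g_pos g_ser) with (N := N'); auto.
    2:{ intros m n. rewrite (Nat.add_comm (S m)). reflexivity. }
    apply sumd_ext. intros d Hd. change (fst ?z) with (Re z). rewrite Re_RtoC_mult. f_equal.
    apply DS_ext. intros m n. cbn [fst Re]. rewrite term_T by lia. symmetry. apply Re_RtoC_mult.
  - unfold EZzeta2, CSeries. cbn [fst snd Re Im].
    rewrite snd_sum.
    transitivity (DS (fun m n => XX m n ^ c * Im (npow (S m + S n) (- (a, b))))).
    { apply DS_ext. intros m n. rewrite term_EZ. apply Im_RtoC_mult. }
    rewrite (main_gen g g_pos g_ser) with (N := N'); auto.
    2:{ intros m n. rewrite (Nat.add_comm (S m)). reflexivity. }
    apply sumd_ext. intros d Hd. change (snd ?z) with (Im z). rewrite Im_RtoC_mult. f_equal.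
    apply DS_ext. intros m n. cbn [snd Im]. rewrite term_T by lia. symmetry. apply Im_RtoC_mult.
Qed.
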